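(* Let $0\le t_o<t_f$ be real numbers, let $p:[t_o,t_f)\to\mathbb{R}$ and $q:[t_o,t_f)\to\mathbb{R}_{\ge0}$ be signals such that $q(t)=0\implies p(t)=0$ for every $t\in[t_o,t_f)$, and let $r(\tau)=\alpha\tau$ ($\tau>0$) with $\alpha\in\mathbb{R}$ (so $\dot r(0)=\alpha$). For $t_o\le t_0<t_1\le t_f$ with $\int_{t_0}^{t_1}q(t)\,dt>0$ define $\psi(t_0,t_1)=\dfrac{\int_{t_0}^{t_1}p(t)\,dt+r(t_1-t_0)}{\int_{t_0}^{t_1}q(t)\,dt}$. Let $\Psi=\{(t_0,t_1):t_o\le t_0<t_1\le t_f\}$, $\Psi_q=\{(t_0,t_1)\in\Psi:q(t)=0\ \forall t\in[t_0,t_1)\}$ and $\tilde\Psi_q=\{t\in[t_o,t_f):q(t)=0\}$. Then: (i) if $r(\tau)\le0$ for all $\tau>0$, $$\max_{(t_0,t_1)\in\Psi\setminus\Psi_q}\psi(t_0,t_1)=\max_{t\in[t_o,t_f)\setminus\tilde\Psi_q}\lim_{\Delta\to0}\psi(t,t+\Delta);$$ (ii) if $r(\tau)\ge0$ for all $\tau>0$, $$\min_{(t_0,t_1)\in\Psi\setminus\Psi_q}\psi(t_0,t_1)=\min_{t\in[t_o,t_f)\setminus\tilde\Psi_q}\lim_{\Delta\to0}\psi(t,t+\Delta);$$ where $\lim_{\Delta\to0}\psi(t,t+\Delta)=\dfrac{p(t)+\dot r(0)}{q(t)}$.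
   Context: This is the fractional function $\frac{\int p+r}{\int q+s}$ with the linear map $s$ in the denominator identically zero; $r$ is a continuous linear map $\mathbb{R}_{>0}\to\mathbb{R}$. *)

(* Defs.v *)
From HB Require Import structures.
From mathcomp Require Import all_boot all_order all_algebra.
From mathcomp Require Import all_classical all_reals all_analysis.
Set Implicit Arguments. Unset Strict Implicit. Unset Printing Implicit Defensive.
Import Order.TTheory GRing.Theory Num.Theory.
Import numFieldNormedType.Exports.
Local Open Scope classical_set_scope.
Local Open Scope ring_scope.

Definition rlin {R : realType} (alpha : R) (tau : R) : R := alpha * tau.

Definition psi {R : realType} (p q : R -> R) (alpha t0 t1 : R) : R :=
  (Rintegral (@lebesgue_measure R) `[t0, t1[ p + rlin alpha (t1 - t0))
  / Rintegral (@lebesgue_measure R) `[t0, t1[ q.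

Definition Psi {R : realType} (to tf : R) : set (R * R) :=
  [set x | to <= x.1 /\ x.1 < x.2 /\ x.2 <= tf].

Definition Psi_q {R : realType} (to tf : R) (q : R -> R) : set (R * R) :=
  [set x | Psi to tf x /\ forall t, x.1 <= t -> t < x.2 -> q t = 0].

Definition Psi_q_tilde {R : realType} (to tf : R) (q : R -> R) : set R :=
  [set t | to <= t /\ t < tf /\ q t = 0].

(* Main.v *)
Set Warnings "-notation-overridden,-ambiguous-paths,-notation-incompatible-prefix".
Require Import Defs.
From HB Require Import structures.
From mathcomp Require Import all_boot all_order all_algebra.
From mathcomp Require Import all_classical all_reals all_analysis.
From mathcomp Require Import measurable_realfun lra.
Import Order.TTheory GRing.Theory Num.Theory.
Import numFieldNormedType.Exports.
Local Open Scope classical_set_scope.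
Local Open Scope ring_scope.

Section H.
Context {R : realType}.
Notation mu := (@lebesgue_measure R).

Lemma mu_co (a b : R) : a <= b -> fine (mu `[a, b[) = b - a.
Proof.
move=> ab; rewrite lebesgue_measure_itv /= lte_fin.
case: ifPn => [_|]; first by rewrite -EFinB.
rewrite -leNgt => ba /=.
by apply/eqP; rewrite eq_sym subr_eq0 eq_le ab ba.
Qed.

Lemma int_cst_co (a b k : R) : mu.-integrable `[a, b[ (EFin \o cst k).
Proof.
apply/integrableP; split; first exact/measurable_EFinP.
rewrite (eq_integral (fun x => (`|k|)%:E)) //.
rewrite integral_cst //= lebesgue_measure_itv /=.
case: ifP => _; last by rewrite mule0 ltry.
by rewrite -EFinB -EFinM ltry.
Qed.

Lemma Rint_cst_co (a b k : R) : a <= b -> \int[mu]_(x in `[a, b[) k = k * (b - a).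
Proof. by move=> ab; rewrite Rintegral_cst // mu_co. Qed.


Lemma avg_cvg (f : R -> R) (to tf t : R) : to <= t -> t < tf ->
  {within `[to, tf[, continuous f} -> mu.-integrable `[to, tf[ (EFin \o f) ->
  (fun D => D^-1 * \int[mu]_(x in `[t, t + D[) f x) @ 0^'+ --> f t.
Proof.
move=> tot ttf cf intf.
have At : `[to, tf[%classic t by rewrite /= in_itv /= tot ttf.
have /subspace_continuousP /(_ t At) /cvgrPdist_le ct := cf.
apply/cvgrPdist_le => e e0.
have := ct e e0; rewrite near_withinE; case/nbhs_ballP => d /= d0 hd.
near=> D.
have D0 : 0 < D by near: D; exact: nbhs_right_gt.
have Dd : D < d by near: D; exact: nbhs_right_lt.
have Dtf : D < tf - t by near: D; apply: nbhs_right_lt; rewrite subr_gt0.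
have sub : `[t, t + D[%classic `<=` `[to, tf[%classic.
  move=> y /=; rewrite !in_itv /= => /andP[ty ytD].
  rewrite (le_trans tot ty) /=; apply: (lt_trans ytD); by rewrite -ltrBrDl.
have intI : mu.-integrable `[t, t + D[ (EFin \o f).
  exact: integrableS intf.
have bnd y : `[t, t + D[%classic y -> f t - e <= f y <= f t + e.
  move=> Iy; have Ay := sub _ Iy.
  move: Iy => /=; rewrite in_itv /= => /andP[ty ytD].
  have Byd : ball t d y.
    rewrite /ball /= distrC ger0_norm; last by rewrite subr_ge0.
    by rewrite ltrBlDl (lt_le_trans ytD) // lerD2l ltW.
  have := hd y Byd Ay; rewrite /from_subspace => H.
  have := H; rewrite distrC => /ler_normlW H2.
  move/ler_normlW : H => H1.
  apply/andP; split; lra.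
have tD : t <= t + D by rewrite lerDl ltW.
have L1 : (f t - e) * D <= \int[mu]_(x in `[t, t + D[) f x.
  rewrite -[X in _ * X](addrK t) [D + t]addrC -Rint_cst_co //.
  apply: le_Rintegral => //; first exact: int_cst_co.
  by move=> y /bnd /andP[].
have L2 : \int[mu]_(x in `[t, t + D[) f x <= (f t + e) * D.
  rewrite -[X in _ * X](addrK t) [D + t]addrC -Rint_cst_co //.
  apply: le_Rintegral => //; first exact: int_cst_co.
  by move=> y /bnd /andP[].
have K1 : D^-1 * \int[mu]_(x in `[t, t + D[) f x <= f t + e.
  by rewrite ler_pdivrMl // mulrC.
have K2 : f t - e <= D^-1 * \int[mu]_(x in `[t, t + D[) f x.
  by rewrite ler_pdivlMl // mulrC.
rewrite ler_norml; apply/andP; split; lra.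
Unshelve. all: by end_near. Qed.

Lemma psi_cvg (p q : R -> R) (alpha to tf t : R) : to <= t -> t < tf ->
  {within `[to, tf[, continuous p} -> {within `[to, tf[, continuous q} ->
  mu.-integrable `[to, tf[ (EFin \o p) -> mu.-integrable `[to, tf[ (EFin \o q) ->
  q t != 0 ->
  (fun D => psi p q alpha t (t + D)) @ 0^'+ --> (p t + alpha) / q t.
Proof.
move=> tot ttf cp cq ip iq qt0.
have Hp := @avg_cvg p to tf t tot ttf cp ip.
have Hq := @avg_cvg q to tf t tot ttf cq iq.
pose G := fun D : R => (D^-1 * \int[mu]_(x in `[t, t + D[) p x + alpha) /
   (D^-1 * \int[mu]_(x in `[t, t + D[) q x).
have H : G @ 0^'+ --> (p t + alpha) / q t.
  apply: cvgM; [apply: cvgD => //; exact: cvg_cst | exact: cvgV].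
have E : {near 0^'+, G =1 (fun D => psi p q alpha t (t + D))}.
  near=> D.
  have D0 : 0 < D by near: D; exact: nbhs_right_gt.
  rewrite /G /psi /rlin /= [t + D]addrC addrK.
  rewrite invfM invrK mulrA; congr (_ * _); rewrite mulrDl mulrAC mulVf ?gt_eqF // mul1r.
  by [].
exact: cvg_trans (near_eq_cvg E) H.
Unshelve. all: by end_near. Qed.

Lemma intq_pos (q : R -> R) (to tf t0 t1 s : R) : to <= t0 -> t0 <= s -> s < t1 -> t1 <= tf ->
  {within `[to, tf[, continuous q} -> mu.-integrable `[to, tf[ (EFin \o q) ->
  (forall t, to <= t -> t < tf -> 0 <= q t) -> q s != 0 ->
  0 < \int[mu]_(x in `[t0, t1[) q x.
Proof.
move=> tot0 t0s st1 t1tf cq iq q0 qs0.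
have tos : to <= s := le_trans tot0 t0s.
have stf : s < tf := lt_le_trans st1 t1tf.
have qs : 0 < q s by rewrite lt_neqAle eq_sym qs0 q0.
have Hq := @avg_cvg q to tf s tos stf cq iq.
have sub01 : `[t0, t1[%classic `<=` `[to, tf[%classic.
  move=> y /=; rewrite !in_itv /= => /andP[ty yt].
  by rewrite (le_trans tot0 ty) (lt_le_trans yt t1tf).
have i01 : mu.-integrable `[t0, t1[ (EFin \o q) by exact: integrableS iq.
have Hev := cvgr_gt _ Hq _ qs.
near (0:R)^'+ => D.
have D0 : 0 < D by near: D; exact: nbhs_right_gt.
have Dlt : D < t1 - s by near: D; apply: nbhs_right_lt; rewrite subr_gt0.
have Hpos : 0 < D^-1 * \int[mu]_(x in `[s, s + D[) q x.
  by near: D; exact: Hev.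
have subD : `[s, s + D[%classic `<=` `[t0, t1[%classic.
  move=> y /=; rewrite !in_itv /= => /andP[ty yt].
  by rewrite (le_trans t0s ty) (lt_le_trans yt) // -lerBrDl ltW.
have iD : mu.-integrable `[s, s + D[ (EFin \o q) by exact: integrableS i01.
have Ipos : 0 < \int[mu]_(x in `[s, s + D[) q x.
  by move: Hpos; rewrite pmulr_rgt0 // invr_gt0.
apply: (lt_le_trans Ipos); rewrite /Rintegral; apply: fine_le.
- exact: integrable_fin_num.
- exact: integrable_fin_num.
- apply: ge0_subset_integral => //.
  + exact: (measurable_int mu).
  + move=> x /sub01 /=; rewrite in_itv /= => /andP[a b]; rewrite lee_fin; exact: q0.
Unshelve. all: by end_near. Qed.

Lemma sup_core (p q : R -> R) (alpha to tf : R) : to < tf ->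
  {within `[to, tf[, continuous q} ->
  mu.-integrable `[to, tf[ (EFin \o p) -> mu.-integrable `[to, tf[ (EFin \o q) ->
  (forall t, to <= t -> t < tf -> 0 <= q t) ->
  (forall t, to <= t -> t < tf -> q t = 0 -> p t = 0) ->
  (forall t, to <= t -> t < tf -> q t != 0 ->
     (fun D => psi p q alpha t (t + D)) @ 0^'+ --> (p t + alpha) / q t) ->
  alpha <= 0 ->
  ereal_sup [set (psi p q alpha x.1 x.2)%:E | x in Psi to tf `\` Psi_q to tf q]
  = ereal_sup [set ((p t + alpha) / q t)%:E
                 | t in `[to, tf[ `\` Psi_q_tilde to tf q].
Proof.
move=> totf cq ip iq q0 qp Hlim a0.
set LHS := [set _ | _ in _]; set RHS := [set _ | _ in _].
have inR t : to <= t -> t < tf -> q t != 0 -> RHS ((p t + alpha) / q t)%:E.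
  move=> a b c; exists t => //; split; first by rewrite /= in_itv /= a b.
  by case=> _ [_ /eqP]; rewrite (negbTE c).
have inL t D : to <= t -> t < tf -> q t != 0 -> 0 < D -> D < tf - t ->
    LHS (psi p q alpha t (t + D))%:E.
  move=> a b c D0 Dt; exists (t, t + D) => //; split.
    by rewrite /Psi /=; split => //; split; [rewrite ltrDl | rewrite -lerBrDl ltW].
  by case=> _ /= /(_ t (lexx _)); rewrite ltrDl => /(_ D0) /eqP; rewrite (negbTE c).
apply/eqP; rewrite eq_le; apply/andP; split.
- apply: ge_ereal_sup => _ [[t0 t1] [[/= tot0 [t01 t1tf]] HnQ] <-] /=.
  have [s [t0s [st1 qs0]]] : exists s, t0 <= s /\ s < t1 /\ q s != 0.
    apply: contrapT => H; apply: HnQ; split => //= t a b.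
    apply/eqP; apply: contrapT => qt; apply: H; exists t; split => //; split => //.
    exact/negP.
  have tos : to <= s := le_trans tot0 t0s.
  have stf : s < tf := lt_le_trans st1 t1tf.
  have Qpos := @intq_pos q to tf t0 t1 s tot0 t0s st1 t1tf cq iq q0 qs0.
  have vle := ereal_sup_ubound (inR s tos stf qs0).
  move: vle; case EM : (ereal_sup RHS) => [m| |] H; [ | by rewrite leey | by move: H; rewrite leeNy_eq].
  rewrite lee_fin /psi ler_pdivrMr //.

  have sub01 : `[t0, t1[%classic `<=` `[to, tf[%classic.
    move=> y /=; rewrite !in_itv /= => /andP[ty yt].
    by rewrite (le_trans tot0 ty) (lt_le_trans yt t1tf).
  have ip01 : mu.-integrable `[t0, t1[ (EFin \o p) by exact: integrableS ip.
  have iq01 : mu.-integrable `[t0, t1[ (EFin \o q) by exact: integrableS iq.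
  rewrite /rlin -(Rint_cst_co t0 t1 alpha (ltW t01)) -RintegralD //; last exact: int_cst_co.
  rewrite -RintegralZl //.
  apply: le_Rintegral => //.
  + apply: (eq_integrable _ _ _ _ (integrableD _ ip01 (int_cst_co t0 t1 alpha))) => //.
  + apply: (eq_integrable _ _ _ _ (integrableZl _ m iq01)) => //.
  move=> y /= /[dup] /sub01 /=; rewrite !in_itv /= => /andP[toy ytf] _.
  have [qy0|qy0] := eqVneq (q y) 0.
    by rewrite qy0 (qp y toy ytf qy0) mulr0 add0r.
  have qy : 0 < q y by rewrite lt_neqAle eq_sym qy0 q0.
  have := ereal_sup_ubound (inR y toy ytf qy0); rewrite EM lee_fin.
  by rewrite ler_pdivrMr // mulrC.
- apply: ge_ereal_sup => _ [t [/= Ht HnQ] <-].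
  move: Ht; rewrite in_itv /= => /andP[tot ttf].
  have qt0 : q t != 0.
    by apply/eqP => qt; apply: HnQ; split => //.
  have ev : \forall D \near 0^'+, 0 < D /\ D < tf - t.
    near=> D; split; first by near: D; exact: nbhs_right_gt.
    by near: D; apply: nbhs_right_lt; rewrite subr_gt0.
  case EL : (ereal_sup LHS) => [l| |]; last 2 first.
  + by rewrite leey.
  + exfalso; have [D [D0 Dt]] := filter_ex ev.
    have := ereal_sup_ubound (inL t D tot ttf qt0 D0 Dt).
    by rewrite EL leeNy_eq.
  rewrite lee_fin; apply: (cvgr_to_le (Hlim t tot ttf qt0)).
  near=> D.
  have [D0 Dt] : 0 < D /\ D < tf - t by near: D; exact: ev.
  have := ereal_sup_ubound (inL t D tot ttf qt0 D0 Dt).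
  by rewrite EL lee_fin.
Unshelve. all: by end_near. Qed.

Lemma RintN (f : R -> R) (a b : R) : mu.-integrable `[a, b[ (EFin \o f) ->
  \int[mu]_(x in `[a, b[) (- f x) = - \int[mu]_(x in `[a, b[) f x.
Proof.
move=> fi.
transitivity (\int[mu]_(x in `[a, b[) (-1 * f x)).
  by apply: eq_Rintegral => x _; rewrite mulN1r.
by rewrite RintegralZl // mulN1r.
Qed.

Lemma psiN (p q : R -> R) (alpha t0 t1 : R) :
  mu.-integrable `[t0, t1[ (EFin \o p) ->
  psi (fun x => - p x) q (- alpha) t0 t1 = - psi p q alpha t0 t1.
Proof.
move=> ip; rewrite /psi /rlin RintN // mulNr -opprD mulNr //.
Qed.

Lemma int_sub (f : R -> R) (to tf a b : R) : to <= a -> b <= tf ->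
  mu.-integrable `[to, tf[ (EFin \o f) -> mu.-integrable `[a, b[ (EFin \o f).
Proof.
move=> toa btf; apply: integrableS => //.
move=> y /=; rewrite !in_itv /= => /andP[ay yb].
by rewrite (le_trans toa ay) (lt_le_trans yb btf).
Qed.

End H.

Theorem corollary1 (R : realType) (to tf alpha : R) (p q : R -> R) :
  0 <= to -> to < tf ->
  {within `[to, tf[, continuous p} ->
  {within `[to, tf[, continuous q} ->
  (@lebesgue_measure R).-integrable `[to, tf[ (EFin \o p) ->
  (@lebesgue_measure R).-integrable `[to, tf[ (EFin \o q) ->
  (forall t, to <= t -> t < tf -> 0 <= q t) ->
  (forall t, to <= t -> t < tf -> q t = 0 -> p t = 0) ->
  (* the pointwise limit formula *)
  (forall t, to <= t -> t < tf -> q t != 0 ->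
     (fun D => psi p q alpha t (t + D)) @ 0^'+ --> (p t + alpha) / q t) /\
  (* (i) *)
  ((forall tau, 0 < tau -> rlin alpha tau <= 0) ->
     ereal_sup [set (psi p q alpha x.1 x.2)%:E | x in Psi to tf `\` Psi_q to tf q]
     = ereal_sup [set ((p t + alpha) / q t)%:E
                 | t in `[to, tf[ `\` Psi_q_tilde to tf q]) /\
  (* (ii) *)
  ((forall tau, 0 < tau -> 0 <= rlin alpha tau) ->
     ereal_inf [set (psi p q alpha x.1 x.2)%:E | x in Psi to tf `\` Psi_q to tf q]
     = ereal_inf [set ((p t + alpha) / q t)%:E
                 | t in `[to, tf[ `\` Psi_q_tilde to tf q]).
Proof.
move=> to0 totf cp cq ip iq q0 qp.
have Hlim : forall t, to <= t -> t < tf -> q t != 0 ->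
     (fun D => psi p q alpha t (t + D)) @ 0^'+ --> (p t + alpha) / q t.
  by move=> t tot ttf qt0; exact: (@psi_cvg R p q alpha to tf t tot ttf cp cq ip iq qt0).
split => //; split.
  move=> ra; apply: sup_core => //.
  by have := ra 1 ltr01; rewrite /rlin mulr1.
move=> ra.
have a0 : 0 <= alpha by have := ra 1 ltr01; rewrite /rlin mulr1.
have ipN : (@lebesgue_measure R).-integrable `[to, tf[ (EFin \o (fun x => - p x)).
  exact: (eq_integrable _ _ _ _ (integrableN ip)).
rewrite /ereal_inf; congr (- _)%E.
have -> : -%E @` [set (psi p q alpha x.1 x.2)%:E | x in Psi to tf `\` Psi_q to tf q]
   = [set (psi (fun x => - p x) q (- alpha) x.1 x.2)%:E | x in Psi to tf `\` Psi_q to tf q].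
  apply/seteqP; split => [_ [_ [x Sx <-] <-]|_ [x Sx <-]].
    exists x => //; rewrite psiN //.
    by case: Sx => -[/= a [b c]] _; exact: (@int_sub R p to tf _ _ a c ip).
  exists (psi p q alpha x.1 x.2)%:E; first by exists x.
  rewrite psiN //.
  by case: Sx => -[/= a [b c]] _; exact: (@int_sub R p to tf _ _ a c ip).
have -> : -%E @` [set ((p t + alpha) / q t)%:E | t in `[to, tf[ `\` Psi_q_tilde to tf q]
   = [set ((- p t + - alpha) / q t)%:E | t in `[to, tf[ `\` Psi_q_tilde to tf q].
  apply/seteqP; split => [_ [_ [x Sx <-] <-]|_ [x Sx <-]].
    by exists x => //; rewrite -opprD mulNr.
  exists ((p x + alpha) / q x)%:E; first by exists x.
  by rewrite -opprD mulNr.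
apply: (@sup_core R (fun x => - p x) q (- alpha) to tf totf cq ipN iq q0).
- by move=> t a b /(qp t a b) ->; rewrite oppr0.
- move=> t tot ttf qt0.
  have E : {near 0^'+, (fun D => - psi p q alpha t (t + D)) =1
                       (fun D => psi (fun x => - p x) q (- alpha) t (t + D))}.
    near=> D.
    have D0 : 0 < D by near: D; exact: nbhs_right_gt.
    have Dt : D < tf - t by near: D; apply: nbhs_right_lt; rewrite subr_gt0.
    rewrite /= psiN //; apply: (@int_sub R p to tf _ _ tot _ ip).
    by rewrite -lerBrDl ltW.
  have H' : (fun D => - psi p q alpha t (t + D)) @ 0^'+ -->
     (- p t + - alpha) / q t.
    have -> : (- p t + - alpha) / q t = - ((p t + alpha) / q t).
      by rewrite -opprD mulNr.
    apply: cvgN; exact: Hlim.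
  exact: cvg_trans (near_eq_cvg E) H'.
- by rewrite oppr_le0.
Unshelve. all: by end_near. Qed.
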